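(* Let $n\ge 2$ and $0\le r\le n$, and work in the polynomial ring $R=k[\alpha_{i,0},\alpha_{i,1},\beta_{m,0},\beta_{m,1}: 1\le i\le n,\ 1\le m\le n-2]$, with $f_n(x,y)=\prod_{i=1}^n(\alpha_{i,0}x-\alpha_{i,1}y)$ and $f_{n-2}(x,y)=\prod_{m=1}^{n-2}(\beta_{m,0}x-\beta_{m,1}y)$. For $(n,r)=(2,2)$ one has $DR_{2,2}(f_2,f_0)=f_0^2$, where $f_0$ is the constant binary form of degree $0$. For every other pair $(n,r)$ the following identity holds in $R$: $$DR_{n,r}(f_n,f_{n-2})=\sum_{\substack{I\sqcup J=[n]\\ |I|=r}}\left(\prod_{\substack{j\in J\\ i\in[n]\setminus\{j\}}}[\alpha_i,\alpha_j]\cdot\prod_{\substack{i\in I\\ m\in[n-2]}}[\beta_m,\alpha_i]\right),$$ where $[N]=\{1,\dots,N\}$ and the sum runs over all ordered decompositions of $[n]$ into disjoint subsets $I,J$ with $|I|=r$.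
   Context: Let $k$ be a field of characteristic zero. For pairs of elements $\sigma=(\sigma_0,\sigma_1)$, $\tau=(\tau_0,\tau_1)$ of a commutative ring (written $\alpha_i=(\alpha_{i,0},\alpha_{i,1})$, $\beta_m=(\beta_{m,0},\beta_{m,1})$), the bracket is $[\sigma,\tau]:=\sigma_0\tau_1-\tau_0\sigma_1$. Resultant convention: if $f=\prod_{i=1}^d(\gamma_{i,0}x-\gamma_{i,1}y)$ and $g=\prod_{j=1}^e(\delta_{j,0}x-\delta_{j,1}y)$ are binary forms of degrees $d,e$, then $\mathrm{res}(f,g)=\prod_{i=1}^d\prod_{j=1}^e[\gamma_i,\delta_j]$; this is a polynomial in the coefficients of $f$ and $g$ (the classical resultant of binary forms), and it is used for forms with coefficients in any commutative $k$-algebra. Discriminant-resultants: for $n\ge2$, write a binary form of degree $n$ as $f(x,y)=\sum_{i=0}^n a_ix^iy^{n-i}$ and let $g$ be a binary form of degree $n-2$. The polynomials $DR_{n,r}(f,g)$ ($0\le r\le n$) in the coefficients of $f,g$ are defined by $$\sum_{r=0}^n DR_{n,r}(f,g)\,t^r=\mathrm{res}\big(f(x,y),\,x\partial_xf(x,y)+t\,xy\,g(x,y)\big)/(a_0a_n),$$ where $t$ is an indeterminate, the second argument is regarded as a binary form of degree $n$ with coefficients in $k[t]$, and the division by $a_0a_n$ is exact. $DR_{n,r}$ is bihomogeneous of degree $2n-2-r$ in the coefficients of $f$ and degree $r$ in those of $g$. *)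

(* Defs.v *)
From HB Require Import structures.
From mathcomp Require Import all_boot all_order all_algebra.
From mathcomp Require Import fraction.
From mathcomp Require Export mpoly.
Set Implicit Arguments. Unset Strict Implicit. Unset Printing Implicit Defensive.
Import Order.TTheory GRing.Theory Num.Theory.
Local Open Scope ring_scope.

Notation "x %:F" := (@FracField.tofrac _ x) : ring_scope.

Definition bracket (A : comNzRingType) (s t : A * A) : A := s.1 * t.2 - t.1 * s.2.

(* A binary form  sum_k a_k x^k y^(d-k)  of (formal) degree d is represented by
   the univariate polynomial  sum_k a_k X^k  (its dehomogenization at y = 1),
   whose k-th coefficient is the coefficient of x^k y^(d-k). *)
Definition prodform (A : comNzRingType) (d : nat) (g : 'I_d -> A * A) : {poly A} :=
  \prod_(i < d) ((g i).1 *: 'X - ((g i).2)%:P).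

(* Sylvester matrix of binary forms of formal degrees d, e with coefficient
   functions a, b (a k = coefficient of x^k y^(d-k)), coefficients listed in
   increasing powers of x: e shifted rows of a, then d shifted rows of b. *)
Definition sylvester (B : comNzRingType) (d e : nat) (a b : nat -> B) : 'M[B]_(e + d) :=
  \matrix_(i < e + d, j < e + d)
    if (i < e)%N then
      (if ((i <= j) && (j <= i + d))%N then a (j - i)%N else 0)
    else
      (if ((i - e <= j) && (j <= i - e + e))%N then b (j - (i - e))%N else 0).

(* Classical resultant of binary forms (Sylvester determinant).  With this
   ordering, res(prod (g_i0 x - g_i1 y), prod (h_j0 x - h_j1 y))
   = prod_{i,j} [g_i, h_j], the convention of the paper. *)
Definition bres (B : comNzRingType) (d e : nat) (a b : nat -> B) : B :=
  \det (sylvester d e a b).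

(* Coefficients (in k[t], i.e. {poly A}) of the degree-n binary form
   x d_x f + t x y g, where f has formal degree n and g formal degree n-2. *)
Definition DRsecond (A : comNzRingType) (n : nat) (f g : {poly A}) (k : nat) : {poly A} :=
  (f`_k *+ k)%:P +
  (if k is k'.+1 then (if (k' <= n - 2)%N then g`_k' else 0) else 0)%:P * 'X.

Definition DRres (A : comNzRingType) (n : nat) (f g : {poly A}) : {poly A} :=
  bres n n (fun k => (f`_k)%:P) (DRsecond n f g).

Definition DR (A : idomainType) (n r : nat) (f g : {poly A}) : {fraction A} :=
  ((DRres n f g)`_r)%:F / ((f`_0 * f`_n)%:F).

Definition nvars (n : nat) : nat := (n * 2 + (n - 2) * 2)%N.

Definition alphaV (k : fieldType) (n : nat) (i : 'I_n) : {mpoly k[nvars n]} * {mpoly k[nvars n]} :=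
  ('X_(lshift ((n - 2) * 2) (mxvec_index i (0 : 'I_2))),
   'X_(lshift ((n - 2) * 2) (mxvec_index i (1 : 'I_2)))).

Definition betaV (k : fieldType) (n : nat) (m : 'I_(n - 2)) : {mpoly k[nvars n]} * {mpoly k[nvars n]} :=
  ('X_(rshift (n * 2) (mxvec_index m (0 : 'I_2))),
   'X_(rshift (n * 2) (mxvec_index m (1 : 'I_2)))).

(* Main.v *)
Require Import Defs.
From HB Require Import structures.
From mathcomp Require Import all_boot all_order all_algebra.
From mathcomp Require Import fraction.
From mathcomp Require Import mpoly.
From mathcomp Require Import ring zify.
Import Order.TTheory GRing.Theory Num.Theory.
Set Implicit Arguments. Unset Strict Implicit. Unset Printing Implicit Defensive.
Local Open Scope ring_scope.

Lemma sum_shift (B : comNzRingType) (N i m : nat) (G : nat -> B) : (i + m < N)%N ->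
  \sum_(j < N) (if ((i <= j) && (j <= i + m))%N then G j else 0) = \sum_(k < m.+1) G (k + i)%N.
Proof.
move=> hN.
rewrite -[LHS]/(\sum_(j < N | true) (if ((i <= j) && (j <= i + m))%N then G j else 0)) -(big_mkord xpredT (fun j => if ((i <= j) && (j <= i + m))%N then G j else 0)) (big_cat_nat _ (n := i)) /=; [|done|lia].
rewrite [X in _ + X](big_cat_nat _ (n := (i + m.+1)%N)) /=; [| lia | lia].
rewrite big1_seq ?add0r; last first.
  move=> j /andP[_]; rewrite mem_index_iota => /andP[_ hj].
  by rewrite leqNgt hj.
rewrite [X in _ + X]big1_seq ?addr0; last first.
  move=> j /andP[_]; rewrite mem_index_iota => /andP[hj _].
  have -> : (j <= i + m)%N = false by lia.
  by rewrite andbF.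
rewrite -{1}[i]add0n big_addn addKn big_mkord; apply: eq_bigr => k _.
have -> : ((i <= k + i) && (k + i <= i + m))%N = true by case: k => k /= hk; lia.
done.
Qed.

Definition hevf (A : comNzRingType) (d : nat) (a : nat -> A) (p : A * A) : A :=
  \sum_(k < d.+1) a k * (p.1 ^+ (d - k) * p.2 ^+ k).

Section Main.
Variable B : comNzRingType.
Variable n : nat.
Definition Vm (p : 'I_n -> B * B) : 'M[B]_n :=
  \matrix_(j < n, c < n) ((p c).2 ^+ j * (p c).1 ^+ (n.-1 - j)).
Definition wv (q : B * B) (j : nat) := q.2 ^+ j * q.1 ^+ ((n + n).-1 - j).

Lemma row_sum (a : nat -> B) (i : nat) (q : B * B) : (i < n)%N ->
  \sum_(j < n + n) (if ((i <= j) && (j <= i + n))%N then a (j - i)%N else 0) * wv q j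
  = q.2 ^+ i * q.1 ^+ (n.-1 - i) * hevf n a q.
Proof.
move=> hi.
under eq_bigr => j _ do rewrite (fun_if (fun x => x * wv q j)) mul0r.
rewrite (@sum_shift _ _ _ _ (fun j => a (j - i)%N * wv q j)); last lia.
rewrite /hevf big_distrr; apply: eq_bigr => k _ /=.
rewrite addnK /wv exprD.
have -> : ((n + n).-1 - (k + i) = (n.-1 - i) + (n - k))%N by case: k => k /= hk; lia.
rewrite exprD; ring.
Qed.

Lemma sylv_main (a b : nat -> B) (p : 'I_n -> B * B) :
  (forall i, hevf n a (p i) = 0) ->
  \det (sylvester n n a b) * (\prod_i (p i).2 ^+ n * \det (Vm p)) =
  a 0%N ^+ n * (\det (Vm p) * \prod_i hevf n b (p i)).
Proof.
move=> ha.
set S := sylvester n n a b.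
pose Wf : 'M[B]_(n + n, n) := \matrix_(j, c) wv (p c) j.
pose W := block_mx 1%:M (usubmx Wf) 0 (dsubmx Wf).
have dW : \det W = \prod_i (p i).2 ^+ n * \det (Vm p).
  rewrite det_ublock det1 mul1r.
  have -> : dsubmx Wf = Vm p *m diag_mx (\row_c (p c).2 ^+ n).
    apply/matrixP => j c; rewrite mul_mx_diag !mxE /wv /=.
    rewrite exprD; have -> : ((n + n).-1 - (n + j) = n.-1 - j)%N by lia.
    ring.
  rewrite det_mulmx det_diag mulrC; congr (_ * _).
  by apply: eq_bigr => i _; rewrite mxE.
have T : S *m W = block_mx (ulsubmx S) 0 (dlsubmx S)
                    (Vm p *m diag_mx (\row_c hevf n b (p c))).
  rewrite -{1}(submxK S) /W mulmx_block !mulmx1 !mulmx0 !addr0.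
  rewrite -!mul_row_col !hsubmxK !vsubmxK.
  congr block_mx.
    apply/matrixP => i c; rewrite !mxE.
    under eq_bigr => j _ do rewrite !mxE /= ltn_ord.
    by rewrite row_sum // ha mulr0.
  apply/matrixP => i c; rewrite mul_mx_diag !mxE.
  under eq_bigr => j _ do rewrite !mxE /= ltnNge leq_addr /= addKn.
  by rewrite row_sum.
have := congr1 determinant T.
rewrite det_mulmx dW det_lblock det_mulmx det_diag => ->.
congr (_ * (_ * _)); last by apply: eq_bigr => i _; rewrite mxE.
rewrite -det_tr det_trig; last first.
  apply/is_trig_mxP => i j hij; rewrite !mxE /= ltn_ord.
  by rewrite leqNgt hij.
rewrite -[in RHS](card_ord n) -prodr_const; apply: eq_bigr => i _; rewrite !mxE /= ltn_ord.
by rewrite leqnn leq_addr subnn.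
Qed.
End Main.

Lemma aux_leq (a b c : nat) : (a <= b.+1)%N -> (c <= 2)%N -> ((c + a).-1 <= b.+2)%N.
Proof. lia. Qed.

Section Hev.
Variable A : comNzRingType.
Definition hev d (q : {poly A}) p := hevf d (fun k => q`_k) p.

Lemma hev_lin d (g p : A * A) (q : {poly A}) : q`_d.+1 = 0 ->
  hev d.+1 ((g.1 *: 'X - (g.2)%:P) * q) p = bracket g p * hev d q p.
Proof.
move=> hq; rewrite /hev /hevf.
under eq_bigr => k _ do
  rewrite mulrBl coefB -scalerAl coefZ coefXM coefCM mulrBl.
rewrite sumrB [X in X - _]big_ord_recl [X in _ - X]big_ord_recr /= hq.
rewrite !(mulr0, mul0r, add0r, addr0).
transitivity (g.1 * p.2 * \sum_(i < d.+1) q`_i * (p.1 ^+ (d - i) * p.2 ^+ i)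
   - g.2 * p.1 * \sum_(i < d.+1) q`_i * (p.1 ^+ (d - i) * p.2 ^+ i));
  last by rewrite /bracket; ring.
congr (_ - _); rewrite big_distrr; apply: eq_bigr => i _ /=.
  rewrite add0n subSS exprS; ring.
rewrite subSn ?exprS; last by rewrite -ltnS.
ring.
Qed.

Lemma size_lin (a b : A) : (size (a *: 'X - b%:P)%R <= 2)%N.
Proof.
apply: leq_trans (size_polyD _ _) _; rewrite geq_max size_polyN.
apply/andP; split; last by apply: leq_trans (size_polyC_leq1 _) _.
by apply: leq_trans (size_scale_leq _ _) _; rewrite size_polyX.
Qed.

Lemma hev_prod (T : Type) (s : seq T) (g : T -> A * A) p :
  (size (\prod_(x <- s) ((g x).1 *: 'X - ((g x).2)%:P))%R <= (size s).+1)%N /\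
  hev (size s) (\prod_(x <- s) ((g x).1 *: 'X - ((g x).2)%:P)) p
    = \prod_(x <- s) bracket (g x) p.
Proof.
elim: s => [|x s [IHs IHh]].
  rewrite !big_nil size_poly1; split=> //.
  by rewrite /hev /hevf big_ord1 coef1 /= !expr0 !mulr1.
rewrite !big_cons /=; split.
  apply: leq_trans (size_mul_leq _ _) _.
  exact: aux_leq IHs (size_lin _ _).
have := @hev_lin (size s) (g x) p (\prod_(j <- s) ((g j).1 *: 'X - ((g j).2)%:P)).

by rewrite -IHh; apply; rewrite nth_default.
Qed.


Lemma hevD d (q1 q2 : {poly A}) p : hev d (q1 + q2) p = hev d q1 p + hev d q2 p.
Proof. by rewrite /hev /hevf -big_split; apply: eq_bigr => k _; rewrite coefD mulrDl. Qed.

Lemma hevZ d c (q : {poly A}) p : hev d (c *: q) p = c * hev d q p.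
Proof. by rewrite /hev /hevf big_distrr; apply: eq_bigr => k _; rewrite coefZ -mulrA. Qed.

Lemma hev_shift d (q : {poly A}) p : q`_d.+1 = 0 -> hev d.+1 q p = p.1 * hev d q p.
Proof.
move=> hq; have := @hev_lin d (0, -1) p q hq.
rewrite /= scale0r sub0r polyCN opprK mul1r => ->; rewrite /bracket /=; ring.
Qed.

Lemma hev_X d (q : {poly A}) p : q`_d.+1 = 0 -> hev d.+1 ('X * q) p = p.2 * hev d q p.
Proof.
move=> hq; have := @hev_lin d (1, 0) p q hq.
rewrite /= scale1r subr0 => ->; rewrite /bracket /=; ring.
Qed.

Lemma hev_at10 d (q : {poly A}) : hev d q (1, 0) = q`_0.
Proof.
rewrite /hev /hevf big_ord_recl /= expr1n expr0 !mulr1 big1 ?addr0 // => i _.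
by rewrite (_ : bump 0 i = i.+1) // exprS mul0r !mulr0.
Qed.

Lemma hev_at01 d (q : {poly A}) : hev d q (0, 1) = q`_d.
Proof.
rewrite /hev /hevf big_ord_recr /= subnn expr1n expr0 !mulr1 big1 ?add0r // => i _.
rewrite expr0n /=; have -> : (d - i == 0)%N = false by case: i => i /= hi; lia.
by rewrite mul0r mulr0.
Qed.

Lemma size_index_enum_ord m : size (index_enum 'I_m) = m.
Proof. by rewrite [index_enum _]unlock -enumT size_enum_ord. Qed.

Lemma size_enum_minus m (i : 'I_m) : size [seq j <- index_enum 'I_m | j != i] = m.-1.
Proof.
rewrite size_filter -[in RHS](size_index_enum_ord m) -(count_predC (pred1 i)).
rewrite count_uniq_mem ?index_enum_uniq // mem_index_enum add1n /=.
by apply: eq_count.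
Qed.

Lemma hev_prodform m (g : 'I_m -> A * A) p :
  (size (prodform g) <= m.+1)%N /\ hev m (prodform g) p = \prod_(j < m) bracket (g j) p.
Proof.
have [h1 h2] := hev_prod (index_enum 'I_m) g p.
by rewrite size_index_enum_ord in h1 h2.
Qed.

Lemma hev_prodform_minus m (g : 'I_m -> A * A) (i : 'I_m) p :
  let F := \prod_(j < m | j != i) ((g j).1 *: 'X - ((g j).2)%:P) in
  (size F <= m)%N /\ hev m.-1 F p = \prod_(j < m | j != i) bracket (g j) p.
Proof.
have [h1 h2] := hev_prod [seq j <- index_enum 'I_m | j != i] g p.
rewrite !big_filter size_enum_minus in h1 h2.
split=> //; apply: leq_trans h1 _; clear h2; by case: m i g => [[]|m].
Qed.

Lemma hev_Xderiv m (g : 'I_m -> A * A) (i : 'I_m) :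
  hev m ('X * (prodform g)^`()) (g i) =
  (g i).1 * (g i).2 * \prod_(j < m | j != i) bracket (g j) (g i).
Proof.
destruct m as [|m]; first by case: i.
have [hF hFv] := hev_prodform_minus g i (g i).
rewrite /prodform (bigD1 i) //=.
move: hF hFv; set L := _ *: 'X - _; set F := \prod_(j < m.+1 | j != i) _ => hF hFv.
have -> : 'X * (L * F)^`() = (g i).1 *: ('X * F) + L * ('X * F^`()).
  rewrite derivM /L derivB derivZ derivX derivC subr0 -!mul_polyC; ring.
rewrite hevD hevZ hev_X; last by rewrite nth_default.
rewrite hev_lin; last by rewrite coefXM /= coef_deriv (nth_default _ hF) mul0rn.
by rewrite /bracket subrr mul0r addr0 hFv mulrA.
Qed.
End Hev.

Lemma coef_prod_lin (A : comNzRingType) m (P Q : 'I_m -> A) r :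
  (\prod_(i < m) ((P i)%:P + (Q i)%:P * 'X))`_r =
  \sum_(I : {set 'I_m} | #|I| == r) (\prod_(j in ~: I) P j * \prod_(i in I) Q i).
Proof.
under eq_bigr do rewrite addrC.
rewrite bigA_distr coef_sum [RHS]big_mkcond /=; apply: eq_bigr => I _.
rewrite (bigID (mem I)) /=.
have -> : \prod_(i | i \in I) (if i \in I then (Q i)%:P * 'X else (P i)%:P)
   = \prod_(i in I) ((Q i)%:P * 'X) by apply: eq_bigr => i ->.
have -> : \prod_(i | i \notin I) (if i \in I then (Q i)%:P * 'X else (P i)%:P)
   = \prod_(i in ~: I) (P i)%:P.
  by apply: eq_big => [i|i /negbTE ->]; rewrite ?in_setC.
rewrite big_split /= -!(rmorph_prod (@polyC A)) prodr_const.
rewrite mulrAC -rmorphM coefCM coefXn mulrC [in RHS]eq_sym.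
by case: eqP; rewrite ?mul1r ?mul0r // mulrC.
Qed.

Lemma hevf_C (A : comNzRingType) d (u : nat -> A) (p : A * A) :
  hevf d (fun k => (u k)%:P) ((p.1)%:P, (p.2)%:P) = (hevf d u p)%:P.
Proof.
rewrite /hevf rmorph_sum; apply: eq_bigr => k _ /=.
by rewrite !rmorphM !rmorphXn.
Qed.

Lemma hevf_CX (A : comNzRingType) d (u w : nat -> A) (p : A * A) :
  hevf d (fun k => (u k)%:P + (w k)%:P * 'X) ((p.1)%:P, (p.2)%:P) =
  (hevf d u p)%:P + (hevf d w p)%:P * 'X.
Proof.
rewrite /hevf !rmorph_sum big_distrl -big_split; apply: eq_bigr => k _ /=.
rewrite !rmorphM !rmorphXn /=; ring.
Qed.

Lemma DRsecond_hev (A : comNzRingType) n (f g : {poly A}) (p : A * A) :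
  g`_(n.-1) = 0 ->
  hevf n (DRsecond n f g) ((p.1)%:P, (p.2)%:P) =
  (hev n ('X * f^`()) p)%:P + (hev n ('X * g) p)%:P * 'X.
Proof.
move=> hg; rewrite /DRsecond hevf_CX /hev /hevf.
congr (_%:P + _%:P * _); apply: eq_bigr => -[[|j] hj] _ /=;
  rewrite coefXM //= ?coef_deriv //.
case: ifP => // hjn.
have -> : j = n.-1 by lia.
by rewrite hg.
Qed.

Lemma hev_Xg (A : comNzRingType) d (q : {poly A}) p : (size q <= d.+1)%N ->
  hev d.+2 ('X * q) p = p.2 * (p.1 * hev d q p).
Proof.
move=> h; rewrite hev_X ?hev_shift ?nth_default //.
exact: leq_trans h _.
Qed.

Lemma sign_sq (A : comNzRingType) n : ((-1) ^+ n) ^+ n = (-1) ^+ n :> A.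
Proof. by rewrite -exprM -signr_odd oddM andbb signr_odd. Qed.

Lemma alg_id (A : comNzRingType) n (a0 a1 V : A) (E : {poly A}) :
  (((-1) ^+ n * a1)%:P) ^+ n * (V%:P * ((a0 * a1)%:P * E)) =
  (((-1) ^+ n * a1) * a0)%:P * E * (a1 ^+ n * V)%:P.
Proof.
rewrite -rmorphXn exprMn sign_sq !rmorphM !rmorphXn rmorphN1; ring.
Qed.

Section App.
Variable k : fieldType.
Hypothesis hk : [pchar k] =i pred0.
Variable n : nat.

Definition aidx (i : 'I_n) (e : 'I_2) : 'I_(nvars n) :=
  lshift ((n - 2) * 2) (mxvec_index i e).

Lemma aidx_inj i e i' e' : aidx i e = aidx i' e' -> (i, e) = (i', e').
Proof. by move/lshift_inj/cast_ord_inj/enum_rank_inj. Qed.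

Definition vv (x : 'I_(nvars n)) : k :=
  if [pick c : 'I_n | x == aidx c 1] is Some c then (c.+1)%:R else 1.

Lemma alpha_eval i : meval vv (@alphaV k n i).1 = 1 /\ meval vv (@alphaV k n i).2 = (i.+1)%:R.
Proof.
rewrite /alphaV /= !mevalXU -/(aidx i 0) -/(aidx i 1) /vv; split.
  by case: pickP => [c /eqP/aidx_inj [_]|].
case: pickP => [c /eqP/aidx_inj [->]//|/(_ i)].
by rewrite eqxx.
Qed.

Lemma natk_neq0 m : ((m.+1)%:R : k) != 0.
Proof. by have /pcharf0P -> := hk. Qed.


Lemma alpha2_neq0 i : (@alphaV k n i).2 != 0.
Proof.
apply/negP => /eqP h; have := (alpha_eval i).2; rewrite h raddf0 => /esym/eqP.
by rewrite (negbTE (natk_neq0 _)).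
Qed.

Lemma alpha1_neq0 i : (@alphaV k n i).1 != 0.
Proof.
apply/negP => /eqP h; have := (alpha_eval i).1; rewrite h raddf0 => /esym/eqP.
by rewrite oner_eq0.
Qed.

Lemma Vm_neq0 : \det (Vm (@alphaV k n)) != 0.
Proof.
apply/negP => /eqP h.
have : \det (map_mx (meval vv) (Vm (@alphaV k n))) = 0 by rewrite det_map_mx h raddf0.
have -> : map_mx (meval vv) (Vm (@alphaV k n)) = Vandermonde n (\row_c ((c : nat).+1)%:R).
  apply/matrixP => j c; rewrite !mxE rmorphM !rmorphXn.
  have [h1 h2] := alpha_eval c.
  rewrite [X in X ^+ j](_ : _ = (c.+1)%:R) ?[X in X ^+ (n.-1 - j)](_ : _ = 1) ?expr1n ?mulr1 //.
rewrite det_Vandermonde => /eqP; apply/negP.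
apply/prodf_neq0 => i _; apply/prodf_neq0 => j hij; rewrite !mxE.
rewrite -natrB; last by rewrite ltnS ltnW.
rewrite subSS -(subnSK hij).
exact: (natk_neq0 (j - i.+1)).
Qed.

Lemma DR_general r (hn : (2 <= n)%N) (g : {poly {mpoly k[nvars n]}})
  (hg : (size g <= n.-1)%N) :
  let f := prodform (@alphaV k n) in
  DR n r f g = (\sum_(I : {set 'I_n} | #|I| == r)
    ((\prod_(j in ~: I) \prod_(i < n | i != j) bracket (alphaV k i) (alphaV k j)) *
     (\prod_(i in I) hev (n - 2) g (alphaV k i))))%:F.
Proof.
move=> f; set al := @alphaV k n.
pose P i : {poly {mpoly k[nvars n]}} * {poly {mpoly k[nvars n]}} :=
  (((al i).1)%:P, ((al i).2)%:P).
pose Pi (j : 'I_n) := \prod_(i < n | i != j) bracket (al i) (al j).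
pose Qi i := hev (n - 2) g (al i).
have ha : forall i, hevf n (fun k => (f`_k)%:P) (P i) = 0.
  move=> i; rewrite hevf_C.
  have [_ h] := hev_prodform al (al i).
  rewrite /hev in h; rewrite h (bigD1 i) //= /bracket subrr mul0r.
  exact: rmorph0.
have hb : forall i, hevf n (DRsecond n f g) (P i) =
    ((al i).1 * (al i).2)%:P * ((Pi i)%:P + (Qi i)%:P * 'X).
  move=> i; rewrite DRsecond_hev ?nth_default // hev_Xderiv.
  have := @hev_Xg _ (n - 2) g (al i).
  rewrite (_ : (n - 2).+1 = n.-1); last by lia.
  rewrite (prednK (ltnW hn)).
  move=> -> //; rewrite /Qi /Pi.
  rewrite !rmorphM /=; ring.
have main := @sylv_main _ n (fun k => (f`_k)%:P) (DRsecond n f g) P ha.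
have eV : Vm P = map_mx polyC (Vm al).
  by apply/matrixP => j c; rewrite !mxE rmorphM !rmorphXn.
rewrite eV det_map_mx in main.
set a1 := \prod_(i < n) (al i).2 in main *.
set a0 := \prod_(i < n) (al i).1.
set V := \det (Vm al) in main *.
set E := \prod_(i < n) ((Pi i)%:P + (Qi i)%:P * 'X).
have hP2 : \prod_i (P i).2 ^+ n = (a1 ^+ n)%:P.
  by rewrite prodrXl -(rmorph_prod (@polyC _)) rmorphXn.
have hH : \prod_i hevf n (DRsecond n f g) (P i) = (a0 * a1)%:P * E.
  rewrite (eq_bigr _ (fun i _ => hb i)) big_split /= -(rmorph_prod (@polyC _)).
  by rewrite big_split.
rewrite hP2 hH in main.
have hf0 : f`_0 = (-1) ^+ n * a1.
  have [_ h] := hev_prodform al (1, 0); rewrite hev_at10 in h; rewrite h.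
  rewrite (eq_bigr (fun j => - (al j).2)); last by move=> j _; rewrite /bracket /=; ring.
  by rewrite prodrN card_ord.
have hfn : f`_n = a0.
  have [_ h] := hev_prodform al (0, 1); rewrite hev_at01 in h; rewrite h.
  by apply: eq_bigr => j _; rewrite /bracket /=; ring.
have hD : DRres n f g = (f`_0 * f`_n)%:P * E.
  have hx : ((a1 ^+ n * V)%:P : {poly {mpoly k[nvars n]}}) != 0.
    rewrite polyC_eq0 mulf_neq0 ?expf_neq0 ?Vm_neq0 //.
    by apply/prodf_neq0 => i _; exact: alpha2_neq0.
  apply: (mulIf hx); rewrite /DRres /bres [in LHS]rmorphM main.
  rewrite hf0 hfn; exact: alg_id.
have hnz : (f`_0 * f`_n)%:F != 0.
  rewrite tofrac_eq0 hf0 hfn !mulf_neq0 ?expf_neq0 ?oppr_eq0 ?oner_eq0 //.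
    by apply/prodf_neq0 => i _; exact: alpha2_neq0.
  by apply/prodf_neq0 => i _; exact: alpha1_neq0.
rewrite /DR hD coefCM coef_prod_lin tofracM mulrAC divff // mul1r.
done.
Qed.
End App.

Theorem theorem2p1 (k : fieldType) (hk : [pchar k] =i pred0) (n r : nat)
  (hn : (2 <= n)%N) (hr : (r <= n)%N) :
  let f := prodform (@alphaV k n) in
  let g := prodform (@betaV k n) in
  if ((n == 2) && (r == 2))%N then
    (forall c : {mpoly k[nvars n]},
       DR n r f c%:P = (c ^+ 2)%:F)
  else
    DR n r f g =
    (\sum_(I : {set 'I_n} | #|I| == r)
       ((\prod_(j in ~: I) \prod_(i < n | i != j) bracket (alphaV k i) (alphaV k j)) *
        (\prod_(i in I) \prod_(m < n - 2) bracket (betaV k m) (alphaV k i))))%:F.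
Proof.
move=> f g; case: ifP => [/andP[/eqP en /eqP er] | _].
  move=> c; rewrite DR_general //; last first.
    by apply: leq_trans (size_polyC_leq1 _) _; rewrite en.
  subst n r; congr (_%:F).
  rewrite (big_pred1 [set: 'I_2]); last first.
    move=> I /=; rewrite eqEcard subsetT cardsT card_ord eqn_leq.
    by have := max_card I; rewrite card_ord => ->.
  rewrite setCT big_set0 mul1r.
  rewrite (eq_bigr (fun _ => c)); last first.
    by move=> i _; rewrite /hev /hevf big_ord1 coefC /= !expr0 !mulr1.
  by rewrite prodr_const cardsT card_ord.
rewrite DR_general //; last first.
  have [h _] := hev_prodform (@betaV k n) (0, 0).
  by apply: leq_trans h _; lia.
congr (_%:F); apply: eq_bigr => I _; congr (_ * _); apply: eq_bigr => i _.
by have [_ ->] := hev_prodform (@betaV k n) (alphaV k i).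
Qed.
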